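(* Let $F$ be a graph of diameter $2$, $n=|V(F)|$, and let $l>n$ be an integer. Then $z_{i+1}\ge z_i+C_{l-2}^{n-2}$ for every $i\in\{1,2,\dots,l-1\}$.
   Context: All graphs are simple, finite, undirected. The $F$-degree of a vertex $v$ in $G$ is the number of subgraphs of $G$ (not necessarily induced) isomorphic to $F$ and containing $v$. $A_{2l-1}$ is the graph with vertex set $\{1,\dots,2l-1\}$ in which distinct $i,j$ are adjacent iff $|i-j|\le l-1$. $z_i$ denotes the $F$-degree of vertex $i$ in $A_{2l-1}$. $C_m^k=\frac{m!}{k!(m-k)!}$ for integers $m\ge k\ge0$, and $C_m^k=0$ otherwise. *)

(* Defs.v *)
From mathcomp Require Import all_boot.
Set Implicit Arguments. Unset Strict Implicit. Unset Printing Implicit Defensive.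

Definition simple_graph (T : finType) (g : rel T) : Prop :=
  irreflexive g /\ symmetric g.

Definition diameter2 (U : finType) (f : rel U) : Prop :=
  (forall x y : U, x != y -> f x y \/ exists w, f x w && f w y) /\
  (exists x y : U, x != y /\ ~~ f x y).

(* A subgraph of g (not necessarily induced) is a pair (S, E) of a vertex set S
   and a set E of edges of g (2-element sets {x,y} with g x y) contained in S. *)
Definition is_subgraph (T : finType) (g : rel T)
  (p : {set T} * {set {set T}}) : bool :=
  [forall e in p.2, (e \subset p.1) &&
     [exists x : T, exists y : T, g x y && (e == [set x; y])]].

Definition iso_to (U T : finType) (f : rel U)
  (p : {set T} * {set {set T}}) : bool :=
  [exists h : {ffun U -> T},
     [&& injectiveb h, [set h x | x in U] == p.1 &
         [forall x, forall y, f x y == ([set h x; h y] \in p.2)]]].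

Definition Fdeg (U T : finType) (f : rel U) (g : rel T) (v : T) : nat :=
  #|[set p : {set T} * {set {set T}} |
       [&& is_subgraph g p, iso_to f p & v \in p.1]]|.

(* A_{2l-1}: vertices 1..2l-1, represented by the ordinals 0..2l-2
   (paper vertex i is the ordinal of value i-1); distinct i, j adjacent
   iff |i - j| <= l - 1. *)
Definition Agraph (l : nat) : rel 'I_(2 * l - 1) :=
  fun i j => (i != j) && (i - j <= l - 1) && (j - i <= l - 1).
Arguments Agraph : clear implicits.

(* Main.v *)
From mathcomp Require Import all_boot zify.
Require Import Defs.
Set Implicit Arguments. Unset Strict Implicit. Unset Printing Implicit Defensive.

Lemma set2_edges (U T : finType) (f : rel U) (h : U -> T) :
  injective h -> irreflexive f -> symmetric f -> forall x y,
  [exists x', exists y', f x' y' && ([set h x; h y] == [set h x'; h y'])] = f x y.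
Proof.
move=> hinj firr fsym x y; apply/idP/idP; last first.
  by move=> fxy; apply/existsP; exists x; apply/existsP; exists y; rewrite fxy eqxx.
case/existsP=> x' /existsP [y' /andP [fxy /eqP E]].
have hx : h x' \in [set h x; h y] by rewrite E set21.
have hy : h y' \in [set h x; h y] by rewrite E set22.
have nxy : x' != y' by apply/eqP => exy; move: fxy; rewrite exy firr.
case/set2P: hx => /hinj ex; case/set2P: hy => /hinj ey; subst.
- by rewrite eqxx in nxy.
- done.
- by rewrite fsym.
- by rewrite eqxx in nxy.
Qed.
Local Notation PT l := ({set 'I_(2*l-1)} * {set {set 'I_(2*l-1)}})%type.

Lemma ordE N (i j : 'I_N) : (i == j) = (nat_of_ord i == nat_of_ord j). Proof. by []. Qed.

Lemma AgraphE l (i j : 'I_(2 * l - 1)) :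
  Agraph l i j = (nat_of_ord i != nat_of_ord j) && (i - j <= l - 1) && (j - i <= l - 1).
Proof. reflexivity. Qed.

Definition swp (T : eqType) (a b z : T) := if z == a then b else if z == b then a else z.

Lemma swpK (T : eqType) (a b : T) : a != b -> forall z, swp a b (swp a b z) = z.
Proof.
move=> ab z; rewrite /swp.
have ba : b != a by rewrite eq_sym.
case: (z =P a) => [->|/eqP za]; first by rewrite (negbTE ba) eqxx.
case: (z =P b) => [->|/eqP zb]; first by rewrite eqxx.
by rewrite (negbTE za) (negbTE zb).
Qed.

Lemma swpa (T : eqType) (a b : T) : swp a b a = b.
Proof. by rewrite /swp eqxx. Qed.
Lemma swpb (T : eqType) (a b : T) : swp a b b = a.
Proof. by rewrite /swp eqxx; case: eqP. Qed.
Lemma swpD (T : eqType) (a b z : T) : z != a -> z != b -> swp a b z = z.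
Proof. by rewrite /swp => /negbTE -> /negbTE ->. Qed.

Lemma garith0 l (a b z : 'I_(2*l-1)) : nat_of_ord a < l - 1 -> nat_of_ord b = a + 1 ->
  z != a -> z != b -> Agraph l a z -> Agraph l b z.
Proof. rewrite !AgraphE !ordE. move: (nat_of_ord a) (nat_of_ord b) (nat_of_ord z). lia. Qed.

Lemma garith1 l (b c x y : 'I_(2*l-1)) : nat_of_ord c = b + (l - 1) -> x != y ->
  b <= x <= c -> b <= y <= c -> Agraph l x y.
Proof. rewrite !AgraphE !ordE. move: (nat_of_ord b) (nat_of_ord c) (nat_of_ord x) (nat_of_ord y). lia. Qed.

Lemma between_neq N (b c z : 'I_N) : b < z < c -> (z == b) = false /\ (z == c) = false.
Proof. by case/andP => h1 h2; rewrite !ordE; split; [apply: gtn_eqF | apply: ltn_eqF]. Qed.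

Theorem lemma2 (U : finType) (f : rel U) (l : nat) :
  simple_graph f -> diameter2 f -> #|U| < l ->
  forall a b : 'I_(2 * l - 1), val a < l - 1 -> val b = val a + 1 ->
    Fdeg f (Agraph l) a + 'C(l - 2, #|U| - 2) <= Fdeg f (Agraph l) b.
Proof.
move=> [firr fsym] [fd2 [x0 [y0 [nxy nfxy]]]] Ul a b; rewrite /= => alt bv.
have [w fxw] : exists w, f x0 w.
  case: (fd2 x0 y0 nxy) => [fxy|[w /andP[fxw _]]]; last by exists w.
  by rewrite fxy in nfxy.
have nx0w : x0 != w by apply/eqP => e; move: fxw; rewrite e firr.
have wx : (w == x0) = false by rewrite eq_sym (negbTE nx0w).
have n2 : 2 <= #|U| by have := max_card [set x0; w]; rewrite cards2 nx0w.
have cl : a + l < 2 * l - 1 by lia.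
pose c : 'I_(2*l-1) := Ordinal cl.
have cv : nat_of_ord c = a + l by [].
have ab : a != b by rewrite ordE; lia.
pose g := Agraph l.
pose sw := swp a b.
have swK : forall z, sw (sw z) = z by apply: swpK.
have swinj : injective sw := can_inj swK.
have swsK : forall A : {set 'I_(2*l-1)}, sw @: (sw @: A) = A.
  by move=> A; rewrite -imset_comp (eq_imset _ swK) imset_id.
pose smap (p : {set 'I_(2*l-1)} * {set {set 'I_(2*l-1)}}) :=
  (sw @: p.1, (fun e : {set 'I_(2*l-1)} => sw @: e) @: p.2).
pose phi (p : {set 'I_(2*l-1)} * {set {set 'I_(2*l-1)}}) := if b \in p.1 then p else smap p.
pose P (v : 'I_(2*l-1)) := [set p : {set 'I_(2*l-1)} * {set {set 'I_(2*l-1)}} |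
       [&& is_subgraph g p, iso_to f p & v \in p.1]].
have -> : Fdeg f (Agraph l) a = #|P a| by [].
have -> : Fdeg f (Agraph l) b = #|P b| by [].
have smapK : forall p : PT l, smap (smap p) = p.
  move=> [S E]; rewrite /smap /=; congr pair; first by apply: swsK.
  by rewrite -imset_comp (eq_imset _ swsK) imset_id.
have gsym : forall x y, g x y = g y x.
  by move=> x y; rewrite /g !AgraphE eq_sym -!andbA (andbC (y - x <= l - 1)).
have PA1 : forall p : PT l, p \in P a -> phi p \in P b.
  move=> p; rewrite inE => /and3P [sg iso ap].
  rewrite /phi; case: ifP => bp; first by rewrite inE sg iso bp.
  rewrite inE; apply/and3P; split.
  - apply/forallP => e'; apply/implyP => /imsetP [e ep ->].
    move: sg => /forallP /(_ e) /implyP /(_ ep) /andP [esub /existsP [x /existsP [y /andP [gxy /eqP exy]]]].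
    apply/andP; split; first by apply: imsetS.
    apply/existsP; exists (sw x); apply/existsP; exists (sw y).
    rewrite exy imsetU1 imset_set1 eqxx andbT.
    have xp : x \in p.1 by apply: (subsetP esub); rewrite exy set21.
    have yp : y \in p.1 by apply: (subsetP esub); rewrite exy set22.
    have xb : x != b by apply/eqP => e0; rewrite -e0 xp in bp.
    have yb : y != b by apply/eqP => e0; rewrite -e0 yp in bp.
    have garith : forall y, y != a -> y != b -> g a y -> g b y.
      by move=> z; apply: garith0.
    case: (x =P a) => [xa|/eqP xa]; case: (y =P a) => [ya|/eqP ya].
    + by move: gxy; rewrite xa ya /g AgraphE eqxx.
    + rewrite xa /sw swpa (swpD ya yb); apply: garith => //; by rewrite -xa.
    + rewrite ya /sw swpa (swpD xa xb) gsym; apply: garith => //; by rewrite -ya gsym.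
    + by rewrite /sw (swpD xa xb) (swpD ya yb).
  - move: iso => /existsP [h /and3P [hinj /eqP himg hE]].
    move/injectiveP: hinj => hinj.
    apply/existsP; exists [ffun x => sw (h x)]; apply/and3P; split.
    + by apply/injectiveP => x y; rewrite !ffunE => /swinj /hinj.
    + by rewrite /= -himg -imset_comp; apply/eqP; apply: eq_imset => x; rewrite ffunE.
    + apply/forallP => x; apply/forallP => y; rewrite !ffunE.
      move/forallP: hE => /(_ x) /forallP /(_ y) /eqP ->.
      have -> : [set sw (h x); sw (h y)] = sw @: [set h x; h y] by rewrite imsetU1 imset_set1.
      by rewrite /= (mem_imset _ _ (imset_inj swinj)).
  - by apply/imsetP; exists a => //; rewrite /sw swpa.
have PA2 : {in P a &, injective phi}.
  have aux : forall p p' : PT l, p \in P a -> b \notin p'.1 -> p <> smap p'.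
    move=> p p'; rewrite inE => /and3P [_ _ ap] bp' e.
    move: ap; rewrite e => /imsetP [z zp az].
    have zb : z = b by rewrite -(swK z) -az /sw swpa.
    by move: zp; rewrite zb (negbTE bp').
  move=> p p' pa p'a; rewrite /phi; case: ifP => bp; case: ifP => bp' //.
  - by move=> e; exfalso; apply: (aux p p' pa); rewrite ?bp' // e.
  - by move=> e; exfalso; apply: (aux p' p p'a); rewrite ?bp // e.
  - by apply: (can_inj smapK).
pose fk (k : 'I_(l-2)) : 'I_(2*l-1) := insubd a (b.+1 + k).
have fkv : forall k : 'I_(l-2), nat_of_ord (fk k) = b.+1 + k.
  move=> k; rewrite /fk val_insubd ifT //; have := ltn_ord k; have := cl; rewrite bv; lia.
pose I := [set fk k | k : 'I_(l-2)].
have cardI : #|I| = l - 2.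
  rewrite card_imset ?card_ord // => k1 k2 e; apply/val_inj.
  by have := fkv k1; have := fkv k2; rewrite e /=; lia.
have Iv : forall z, z \in I -> b < z < c.
  move=> z /imsetP [k _ ->]; rewrite fkv cv bv; have := ltn_ord k; lia.
pose D := [set X : {set 'I_(2*l-1)} | X \subset I & #|X| == #|U| - 2].
have cardD : #|D| = 'C(l - 2, #|U| - 2) by rewrite cards_draws cardI.
pose U' := ~: [set x0; w].
have cardU' : #|U'| = #|U| - 2.
  by have := cardsC [set x0; w]; rewrite cards2 nx0w /U'; lia.
pose hX (X : {set 'I_(2*l-1)}) (x : U) :=
  if x == x0 then b else if x == w then c else nth b (enum X) (index x (enum U')).
have Xv : forall X, X \in D -> forall z, z \in X -> b < z < c.
  by move=> X; rewrite inE => /andP [/subsetP XI _] z /XI /Iv.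
have h1 : forall X, X \in D -> forall x, x \in U' -> hX X x \in X.
  move=> X; rewrite inE => /andP [_ /eqP cX] x xU.
  have := xU; rewrite !inE negb_or => /andP [xx0 xw].
  rewrite /hX (negbTE xx0) (negbTE xw) -mem_enum; apply: mem_nth.
  by rewrite -cardE cX -cardU' cardE index_mem mem_enum.
have hv : forall X, X \in D -> forall x, b <= hX X x <= c.
  move=> X XD x; case: (boolP (x \in U')) => xU.
    by have := Xv X XD _ (h1 X XD x xU); lia.
  move: xU; rewrite !inE negbK /hX => /orP [/eqP -> | /eqP ->]; rewrite ?eqxx //.
    by rewrite cv bv; lia.
  by rewrite wx cv bv; lia.
have hinj : forall X, X \in D -> injective (hX X).
  move=> X XD.
  have hxb : forall x, (hX X x == b) = (x == x0).
    move=> x; case: (boolP (x \in U')) => xU.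
      have := Xv X XD _ (h1 X XD x xU); have := xU; rewrite !inE negb_or => /andP [/negbTE -> _].
      by rewrite ordE; lia.
    move: xU; rewrite !inE negbK => /orP [/eqP -> | /eqP ->]; rewrite /hX ?eqxx //.
    by rewrite wx ordE cv bv; lia.
  have hxc : forall x, (hX X x == c) = (x == w).
    move=> x; case: (boolP (x \in U')) => xU.
      have := Xv X XD _ (h1 X XD x xU); have := xU; rewrite !inE negb_or => /andP [_ /negbTE ->].
      by rewrite ordE; lia.
    move: xU; rewrite !inE negbK => /orP [/eqP -> | /eqP ->]; rewrite /hX ?eqxx //.
      by rewrite ordE cv bv (negbTE nx0w); lia.
    by rewrite wx eqxx.
  move=> x y e.
  case: (boolP (x \in U')) => xU; last first.
    move: xU; rewrite !inE negbK => /orP [/eqP xe | /eqP xe].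
      by rewrite xe; apply/esym/eqP; rewrite -hxb -e hxb xe.
    by rewrite xe; apply/esym/eqP; rewrite -hxc -e hxc xe.
  case: (boolP (y \in U')) => yU; last first.
    move: yU; rewrite !inE negbK => /orP [/eqP ye | /eqP ye].
      by rewrite ye; apply/eqP; rewrite -hxb e hxb ye.
    by rewrite ye; apply/eqP; rewrite -hxc e hxc ye.
  move: e; have := xU; have := yU; rewrite !inE !negb_or => /andP [yx0 yw] /andP [xx0 xw].
  rewrite /hX (negbTE xx0) (negbTE xw) (negbTE yx0) (negbTE yw).
  move: XD; rewrite inE => /andP [_ /eqP cX].
  have sz : size (enum X) = size (enum U') by rewrite -!cardE cX cardU'.
  have i1 : index x (enum U') < size (enum X) by rewrite sz index_mem mem_enum.
  have i2 : index y (enum U') < size (enum X) by rewrite sz index_mem mem_enum.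
  move/eqP; rewrite (nth_uniq b i1 i2 (enum_uniq _)) => /eqP ei; have ex : x = nth x (enum U') (index x (enum U')) by rewrite nth_index // mem_enum.
  by rewrite ex ei nth_index // mem_enum.
have himg : forall X, X \in D -> [set hX X x | x in U] = X :|: [set b; c].
  move=> X XD; apply/eqP; rewrite eqEcard; apply/andP; split.
    apply/subsetP => z /imsetP [x _ ->]; case: (boolP (x \in U')) => xU.
      by rewrite inE h1.
    move: xU; rewrite !inE negbK /hX => /orP [/eqP -> | /eqP ->]; rewrite ?wx !eqxx ?orbT //.
  rewrite card_imset; last by apply: hinj.
  move: XD; rewrite inE => /andP [_ /eqP cX].
  have bc : (b != c) by rewrite ordE cv bv; lia.
  rewrite cardsU cards2 bc /= cX subnK //; apply: leq_subr.
pose q (X : {set 'I_(2*l-1)}) : PT l := (X :|: [set b; c],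
  [set e | [exists x, exists y, f x y && (e == [set hX X x; hX X y])]]).
have qB : forall X, X \in D -> q X \in P b.
  move=> X XD; rewrite inE; apply/and3P; split.
  - apply/forallP => e; apply/implyP; rewrite inE => /existsP [x /existsP [y /andP [fxy /eqP ->]]].
    apply/andP; split.
      by apply/subsetP => z /set2P [->|->]; rewrite /= -(himg X XD); apply: imset_f.
    apply/existsP; exists (hX X x); apply/existsP; exists (hX X y); rewrite eqxx andbT.
    have nxy' : hX X x != hX X y.
      by apply/negP => /eqP /(hinj X XD) e2; move: fxy; rewrite e2 firr.
    apply: garith1 nxy' (hv X XD x) (hv X XD y); rewrite cv bv; lia.
  - apply/existsP; exists [ffun x => hX X x]; apply/and3P; split.
    + by apply/injectiveP => x y; rewrite !ffunE; apply: hinj.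
    + by rewrite /= -(himg X XD); apply/eqP; apply: eq_imset => x; rewrite ffunE.
    + apply/forallP => x; apply/forallP => y; rewrite !ffunE inE.
      by rewrite (set2_edges (hinj X XD) firr fsym) eqxx.
  - by rewrite !inE eqxx orbT.
have qa : forall X, X \in D -> a \notin (q X).1.
  move=> X XD; rewrite !inE !negb_or; apply/and3P; split.
  - by apply/negP => /(Xv X XD); lia.
  - by [].
  - by rewrite ordE cv; lia.
have qbc : forall X, X \in D -> [set b; c] \in (q X).2.
  move=> X XD; rewrite inE; apply/existsP; exists x0; apply/existsP; exists w.
  by rewrite fxw /hX eqxx wx /= eqxx.
have qinj : {in D &, injective q}.
  move=> X Y XD YD [e1 _]; apply/setP => z.
  move/setP: e1 => /(_ z); rewrite !inE.
  case: (boolP (z \in X)) => zX; case: (boolP (z \in Y)) => zY //=.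
    by have [-> ->] := between_neq (Xv X XD z zX).
  by have [-> ->] := between_neq (Xv Y YD z zY).
pose K := q @: D.
have cardK : #|K| = 'C(l - 2, #|U| - 2) by rewrite card_in_imset // cardD.
have PA3 : forall p, p \in P a -> phi p \notin K.
  move=> p pa; apply/negP => /imsetP [X XD e].
  move: pa; rewrite inE => /and3P [sg _ ap].
  move: e; rewrite /phi; case: ifP => bp e.
    by move: (qa X XD); rewrite -e ap.
  have := qbc X XD; rewrite -e => /imsetP [e0 e0p E0].
  have e0E : e0 = [set a; c].
    rewrite -(swsK e0) -E0 imsetU1 imset_set1 /sw swpb swpD //.
      by rewrite ordE cv; lia.
    by rewrite ordE cv bv; lia.
  move: sg => /forallP /(_ e0) /implyP /(_ e0p) /andP [_ /existsP [x /existsP [y /andP [gxy /eqP exy]]]].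
  have xac : x \in [set a; c] by rewrite -e0E exy set21.
  have yac : y \in [set a; c] by rewrite -e0E exy set22.
  move: gxy; rewrite /g AgraphE.
  by case/set2P: xac => ->; case/set2P: yac => ->; rewrite ?eqxx //= ?cv; apply/negP; lia.
have sub1 : phi @: P a \subset P b by apply/subsetP => q' /imsetP [p pa ->]; apply: PA1.
have sub2 : K \subset P b by apply/subsetP => q' /imsetP [X XD ->]; apply: qB.
have dis : phi @: P a :&: K = set0.
  apply/setP => q'; rewrite !inE; apply/negP => /andP [/imsetP [p pa ->]].
  by apply/negP; apply: PA3.
rewrite -(card_in_imset PA2) -cardK.
have := cardsU (phi @: P a) K; rewrite dis cards0 subn0 => <-.
by apply: subset_leq_card; rewrite subUset sub1 sub2.
Qed.
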